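(* Let $$E=(\{0\}\times[0,1])\cup\bigcup_{n=1}^\infty\Big(\big(\{\tfrac1n\}\times[0,1]\big)\cup\big([\tfrac{1}{2n},\tfrac{1}{2n-1}]\times\{1\}\big)\cup\big([\tfrac{1}{2n+1},\tfrac{1}{2n}]\times\{0\}\big)\Big)\subseteq[0,1]^2.$$ Then $E$ is a connected closed subset of $[0,1]^2$ which is neither arcwise connected nor locally connected, and $E$ is a $B_1$-retract of $[0,1]^2$.
   Context: A function $f:X\to Y$ between topological spaces is a Baire-one function if it is the pointwise limit of a sequence of continuous functions $f_n:X\to Y$. A subset $E$ of $X$ (with the subspace topology) is a $B_1$-retract of $X$ if there exists a Baire-one function $r:X\to E$ with $r(x)=x$ for all $x\in E$. *)

(* Defs.v *)
From Stdlib Require Import Reals Lra Lia.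
Open Scope R_scope.

Definition pt := (R * R)%type.

Definition dist2 (p q : pt) : R :=
  sqrt ((fst p - fst q) ^ 2 + (snd p - snd q) ^ 2).

Definition square (p : pt) : Prop :=
  0 <= fst p <= 1 /\ 0 <= snd p <= 1.

Definition E (p : pt) : Prop :=
  let x := fst p in let y := snd p in
  (x = 0 /\ 0 <= y <= 1) \/
  exists n : nat, (1 <= n)%nat /\
    ( (x = 1 / INR n /\ 0 <= y <= 1)
   \/ (1 / INR (2 * n) <= x <= 1 / INR (2 * n - 1) /\ y = 1)
   \/ (1 / INR (2 * n + 1) <= x <= 1 / INR (2 * n) /\ y = 0) ).

Definition open2 (U : pt -> Prop) : Prop :=
  forall p, U p -> exists eps, eps > 0 /\ forall q, dist2 p q < eps -> U q.

Definition closed2 (A : pt -> Prop) : Prop :=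
  forall p, (forall eps, eps > 0 -> exists q, A q /\ dist2 p q < eps) -> A p.

Definition connected2 (A : pt -> Prop) : Prop :=
  ~ exists U V : pt -> Prop,
      open2 U /\ open2 V /\
      (forall p, A p -> U p \/ V p) /\
      (exists p, A p /\ U p) /\ (exists p, A p /\ V p) /\
      (forall p, A p -> U p -> V p -> False).

(* A path/arc in A: gamma restricted to [0,1]. An arc is a homeomorphism of
   [0,1] onto its image: continuous, injective, with continuous inverse. *)
Definition is_arc_in (A : pt -> Prop) (gamma : R -> pt) : Prop :=
  (forall t, 0 <= t <= 1 -> A (gamma t)) /\
  (forall t, 0 <= t <= 1 -> forall eps, eps > 0 -> exists delta, delta > 0 /\
     forall s, 0 <= s <= 1 -> Rabs (s - t) < delta -> dist2 (gamma s) (gamma t) < eps) /\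
  (forall s t, 0 <= s <= 1 -> 0 <= t <= 1 -> gamma s = gamma t -> s = t) /\
  (forall t, 0 <= t <= 1 -> forall eps, eps > 0 -> exists delta, delta > 0 /\
     forall s, 0 <= s <= 1 -> dist2 (gamma s) (gamma t) < delta -> Rabs (s - t) < eps).

Definition arcwise_connected2 (A : pt -> Prop) : Prop :=
  forall p q, A p -> A q -> p <> q ->
    exists gamma, is_arc_in A gamma /\ gamma 0 = p /\ gamma 1 = q.

Definition locally_connected2 (A : pt -> Prop) : Prop :=
  forall p U, A p -> open2 U -> U p ->
    exists V, open2 V /\ V p /\
      (forall q, A q -> V q -> U q) /\
      connected2 (fun q => A q /\ V q).

Definition continuous_on (X Y : pt -> Prop) (f : pt -> pt) : Prop :=
  (forall p, X p -> Y (f p)) /\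
  forall p, X p -> forall eps, eps > 0 -> exists delta, delta > 0 /\
    forall q, X q -> dist2 p q < delta -> dist2 (f p) (f q) < eps.

Definition baire_one (X Y : pt -> Prop) (r : pt -> pt) : Prop :=
  (forall p, X p -> Y (r p)) /\
  exists f : nat -> pt -> pt,
    (forall n, continuous_on X Y (f n)) /\
    (forall p, X p -> forall eps, eps > 0 -> exists N, forall n, (n >= N)%nat ->
       dist2 (f n p) (r p) < eps).

Definition B1_retract (X A : pt -> Prop) : Prop :=
  exists r, baire_one X A r /\ forall p, A p -> r p = p.

(* Main.v *)
Require Import Defs.
From Stdlib Require Import Reals Lra Lia ClassicalEpsilon Classical.
Open Scope R_scope.


Lemma sq_abs a : a ^ 2 = Rabs a ^ 2.
Proof. unfold Rabs; destruct (Rcase_abs a); ring. Qed.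

Lemma d_fst p q : Rabs (fst p - fst q) <= dist2 p q.
Proof.
  unfold dist2. rewrite <- (sqrt_pow2 (Rabs _)) by apply Rabs_pos.
  apply sqrt_le_1_alt. rewrite <- sq_abs.
  assert (0 <= (snd p - snd q)^2) by (apply pow2_ge_0). lra.
Qed.

Lemma d_snd p q : Rabs (snd p - snd q) <= dist2 p q.
Proof.
  unfold dist2. rewrite <- (sqrt_pow2 (Rabs _)) by apply Rabs_pos.
  apply sqrt_le_1_alt. rewrite <- sq_abs.
  assert (0 <= (fst p - fst q)^2) by (apply pow2_ge_0). lra.
Qed.

Lemma d_le_sum p q : dist2 p q <= Rabs (fst p - fst q) + Rabs (snd p - snd q).
Proof.
  unfold dist2. rewrite <- (sqrt_pow2 (Rabs (fst p - fst q) + Rabs (snd p - snd q))).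
  2:{ pose proof (Rabs_pos (fst p - fst q)); pose proof (Rabs_pos (snd p - snd q)); lra. }
  apply sqrt_le_1_alt. rewrite (sq_abs (fst p - fst q)), (sq_abs (snd p - snd q)).
  pose proof (Rabs_pos (fst p - fst q)); pose proof (Rabs_pos (snd p - snd q)).
  assert (0 <= Rabs (fst p - fst q) * Rabs (snd p - snd q)) by (apply Rmult_le_pos; lra).
  nra.
Qed.

Lemma d_nonneg p q : 0 <= dist2 p q.
Proof. unfold dist2; apply sqrt_pos. Qed.

Lemma d_sym p q : dist2 p q = dist2 q p.
Proof. unfold dist2. f_equal. ring. Qed.

Lemma d_horiz p q : snd p = snd q -> dist2 p q = Rabs (fst p - fst q).
Proof.
  intro H. unfold dist2. rewrite H.
  replace ((fst p - fst q)^2 + (snd q - snd q)^2) with ((fst p - fst q)^2) by ring.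
  rewrite sq_abs; rewrite sqrt_pow2 by apply Rabs_pos; reflexivity.
Qed.

Lemma d_vert p q : fst p = fst q -> dist2 p q = Rabs (snd p - snd q).
Proof.
  intro H. unfold dist2. rewrite H.
  replace ((fst q - fst q)^2 + (snd p - snd q)^2) with ((snd p - snd q)^2) by ring.
  rewrite sq_abs; rewrite sqrt_pow2 by apply Rabs_pos; reflexivity.
Qed.

Lemma d_refl p : dist2 p p = 0.
Proof. unfold dist2. replace ((fst p - fst p) ^ 2 + (snd p - snd p) ^ 2) with 0 by ring. apply sqrt_0. Qed.

Definition rcont (f : pt -> R) : Prop :=
  forall p eps, eps > 0 -> exists d, d > 0 /\ forall q, dist2 p q < d -> Rabs (f q - f p) < eps.

Lemma rc_const c : rcont (fun _ => c).
Proof. intros p eps He. exists 1. split. lra. intros. replace (c - c) with 0 by ring. rewrite Rabs_R0; lra. Qed.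

Lemma rc_fst : rcont fst.
Proof. intros p eps He. exists eps. split. lra. intros q Hq.
  pose proof (d_fst p q). rewrite Rabs_minus_sym. lra. Qed.

Lemma rc_snd : rcont snd.
Proof. intros p eps He. exists eps. split. lra. intros q Hq.
  pose proof (d_snd p q). rewrite Rabs_minus_sym. lra. Qed.

Lemma rc_lip2 (op : R -> R -> R) f g :
  (forall a b c d, Rabs (op a b - op c d) <= Rabs (a - c) + Rabs (b - d)) ->
  rcont f -> rcont g -> rcont (fun p => op (f p) (g p)).
Proof.
  intros Hop Hf Hg p eps He.
  destruct (Hf p (eps/2)) as [d1 [Hd1 H1]]. lra.
  destruct (Hg p (eps/2)) as [d2 [Hd2 H2]]. lra.
  exists (Rmin d1 d2). split. apply Rmin_pos; lra.
  intros q Hq. pose proof (Rmin_l d1 d2); pose proof (Rmin_r d1 d2).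
  specialize (H1 q ltac:(lra)). specialize (H2 q ltac:(lra)).
  pose proof (Hop (f q) (g q) (f p) (g p)). lra.
Qed.

Lemma abs_cases a : (0 <= a /\ Rabs a = a) \/ (a < 0 /\ Rabs a = - a).
Proof. unfold Rabs; destruct (Rcase_abs a); [right|left]; split; lra. Qed.

Lemma lip_plus a b c d : Rabs (a + b - (c + d)) <= Rabs (a - c) + Rabs (b - d).
Proof. replace (a + b - (c+d)) with ((a - c) + (b - d)) by ring. apply Rabs_triang. Qed.
Lemma lip_minus a b c d : Rabs (a - b - (c - d)) <= Rabs (a - c) + Rabs (b - d).
Proof. replace (a - b - (c-d)) with ((a - c) + - (b - d)) by ring.
  eapply Rle_trans. apply Rabs_triang. rewrite Rabs_Ropp. lra. Qed.
Lemma lip_max a b c d : Rabs (Rmax a b - Rmax c d) <= Rabs (a - c) + Rabs (b - d).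
Proof. unfold Rmax. destruct (Rle_dec a b), (Rle_dec c d); unfold Rabs;
  repeat destruct Rcase_abs; lra. Qed.
Lemma lip_min a b c d : Rabs (Rmin a b - Rmin c d) <= Rabs (a - c) + Rabs (b - d).
Proof. unfold Rmin. destruct (Rle_dec a b), (Rle_dec c d); unfold Rabs;
  repeat destruct Rcase_abs; lra. Qed.

Lemma rc_plus f g : rcont f -> rcont g -> rcont (fun p => f p + g p).
Proof. apply rc_lip2 with (op := Rplus). apply lip_plus. Qed.
Lemma rc_minus f g : rcont f -> rcont g -> rcont (fun p => f p - g p).
Proof. apply rc_lip2 with (op := Rminus). apply lip_minus. Qed.
Lemma rc_max f g : rcont f -> rcont g -> rcont (fun p => Rmax (f p) (g p)).
Proof. apply rc_lip2 with (op := Rmax). apply lip_max. Qed.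
Lemma rc_min f g : rcont f -> rcont g -> rcont (fun p => Rmin (f p) (g p)).
Proof. apply rc_lip2 with (op := Rmin). apply lip_min. Qed.
Lemma rc_abs f : rcont f -> rcont (fun p => Rabs (f p)).
Proof.
  intros Hf p eps He. destruct (Hf p eps He) as [d [Hd H]]. exists d. split; auto.
  intros q Hq. specialize (H q Hq). pose proof (Rabs_triang_inv (f q) (f p)).
  pose proof (Rabs_triang_inv (f p) (f q)). rewrite (Rabs_minus_sym (f p)) in H1.
  unfold Rabs at 1; destruct Rcase_abs; lra.
Qed.

Lemma rc_mult f g : rcont f -> rcont g -> rcont (fun p => f p * g p).
Proof.
  intros Hf Hg p eps He.
  set (A := Rabs (f p) + 1). set (B := Rabs (g p) + 1).
  assert (HA : A > 0) by (unfold A; pose proof (Rabs_pos (f p)); lra).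
  assert (HB : B > 0) by (unfold B; pose proof (Rabs_pos (g p)); lra).
  destruct (Hg p (Rmin 1 (eps / (2 * A)))) as [d2 [Hd2 H2]].
  { apply Rmin_pos. lra. apply Rdiv_lt_0_compat; lra. }
  destruct (Hf p (eps / (2 * B))) as [d1 [Hd1 H1]]. apply Rdiv_lt_0_compat; lra.
  exists (Rmin d1 d2). split. apply Rmin_pos; lra.
  intros q Hq. pose proof (Rmin_l d1 d2); pose proof (Rmin_r d1 d2).
  specialize (H1 q ltac:(lra)). specialize (H2 q ltac:(lra)).
  pose proof (Rmin_l 1 (eps / (2 * A))); pose proof (Rmin_r 1 (eps / (2 * A))).
  replace (f q * g q - f p * g p) with ((f q - f p) * g q + f p * (g q - g p)) by ring.
  eapply Rle_lt_trans. apply Rabs_triang. rewrite !Rabs_mult.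
  assert (HgB : Rabs (g q) <= B).
  { unfold B. pose proof (Rabs_triang_inv (g q) (g p)). lra. }
  assert (Hfa : Rabs (f p) <= A - 1) by (unfold A; lra).
  assert (T1 : Rabs (f q - f p) * Rabs (g q) <= eps / (2*B) * B).
  { apply Rmult_le_compat; try apply Rabs_pos; lra. }
  assert (T2 : Rabs (f p) * Rabs (g q - g p) <= A * (eps / (2*A))).
  { apply Rmult_le_compat; try apply Rabs_pos; lra. }
  assert (T3 : Rabs (f q - f p) * Rabs (g q) < eps / 2 \/ Rabs (f q - f p) * Rabs (g q) <= eps / 2).
  { right. replace (eps/2) with (eps / (2*B) * B) by (field; lra). lra. }
  assert (T4 : Rabs (f p) * Rabs (g q - g p) < eps/2).
  { apply Rle_lt_trans with ((A-1) * (eps / (2*A))).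
    apply Rmult_le_compat; try apply Rabs_pos; lra.
    replace (eps/2) with (A * (eps / (2*A))) by (field; lra).
    apply Rmult_lt_compat_r. apply Rdiv_lt_0_compat; lra. lra. }
  destruct T3; lra.
Qed.


Definition ptc (F : pt -> pt) (p : pt) : Prop :=
  forall eps, eps > 0 -> exists d, d > 0 /\ forall q, dist2 p q < d -> dist2 (F p) (F q) < eps.

Lemma ptc_pair f g p : rcont f -> rcont g -> ptc (fun q => (f q, g q)) p.
Proof.
  intros Hf Hg eps He.
  destruct (Hf p (eps/2)) as [d1 [Hd1 H1]]. lra.
  destruct (Hg p (eps/2)) as [d2 [Hd2 H2]]. lra.
  exists (Rmin d1 d2). split. apply Rmin_pos; lra.
  intros q Hq. pose proof (Rmin_l d1 d2); pose proof (Rmin_r d1 d2).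
  specialize (H1 q ltac:(lra)). specialize (H2 q ltac:(lra)).
  eapply Rle_lt_trans. apply d_le_sum. simpl.
  rewrite (Rabs_minus_sym (f p)), (Rabs_minus_sym (g p)). lra.
Qed.

Lemma ptc_comp F G p : ptc F p -> ptc G (F p) -> ptc (fun q => G (F q)) p.
Proof.
  intros HF HG eps He. destruct (HG eps He) as [d1 [Hd1 H1]].
  destruct (HF d1 Hd1) as [d2 [Hd2 H2]]. exists d2. split; auto.
Qed.

Lemma inv_cont x : x > 0 -> forall eps, eps > 0 -> exists d, d > 0 /\
  forall x', Rabs (x' - x) < d -> Rabs (/ x' - / x) < eps.
Proof.
  intros Hx eps He. exists (Rmin (x/2) (eps * x * x / 2)). split.
  { apply Rmin_pos. lra. assert (0 < eps * x * x) by (repeat apply Rmult_lt_0_compat; lra). lra. }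
  intros x' H. pose proof (Rmin_l (x/2) (eps * x * x / 2)); pose proof (Rmin_r (x/2) (eps * x * x / 2)).
  assert (Hx' : x' > x / 2) by (unfold Rabs in H; destruct Rcase_abs; lra).
  replace (/ x' - / x) with ((x - x') / (x * x')) by (field; lra).
  unfold Rdiv. rewrite Rabs_mult. rewrite Rabs_inv. rewrite Rabs_minus_sym.
  rewrite (Rabs_right (x * x')) by (apply Rle_ge; apply Rmult_le_pos; lra).
  assert (x * x' > x * x / 2) by nra.
  apply Rlt_le_trans with ((eps * x * x / 2) * / (x * x / 2)).
  - apply Rle_lt_trans with (Rabs (x' - x) * / (x * x / 2)).
    + apply Rmult_le_compat_l. apply Rabs_pos. apply Rinv_le_contravar. nra. lra.
    + apply Rmult_lt_compat_r. apply Rinv_0_lt_compat. nra. lra.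
  - right. field. lra.
Qed.

Lemma ptc_inv p : fst p > 0 -> ptc (fun q => (1 / fst q, snd q)) p.
Proof.
  intros Hp eps He. destruct (inv_cont (fst p) Hp (eps/2)) as [d [Hd H]]. lra.
  exists (Rmin d (eps/2)). split. apply Rmin_pos; lra.
  intros q Hq. pose proof (Rmin_l d (eps/2)); pose proof (Rmin_r d (eps/2)).
  eapply Rle_lt_trans. apply d_le_sum. simpl.
  pose proof (d_fst p q); pose proof (d_snd p q).
  rewrite Rabs_minus_sym in H2. specialize (H (fst q) ltac:(lra)).
  unfold Rdiv. rewrite !Rmult_1_l. rewrite Rabs_minus_sym. lra.
Qed.

Lemma real_ind (a b : R) (P : R -> Prop) : a <= b -> P a ->
  (forall m, a < m <= b -> (forall s, a <= s < m -> P s) -> P m) ->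
  (forall m, a <= m < b -> P m -> exists d, d > 0 /\ forall s, m < s < m + d -> s <= b -> P s) ->
  forall s, a <= s <= b -> P s.
Proof.
  intros Hab Pa HL HR.
  set (A := fun t => a <= t <= b /\ forall r, a <= r <= t -> P r).
  assert (Hb : bound A) by (exists b; intros t [Ht _]; lra).
  assert (Hne : exists t, A t) by (exists a; split; [lra| intros r Hr; replace r with a by lra; auto]).
  destruct (completeness A Hb Hne) as [m [Hub Hlub]].
  assert (Aa : A a) by (split; [lra| intros r Hr; replace r with a by lra; auto]).
  assert (Ham : a <= m) by (apply Hub; exact Aa).
  assert (Hmb : m <= b) by (apply Hlub; intros t [Ht _]; lra).
  assert (Hbelow : forall s, a <= s < m -> P s).
  { intros s Hs. apply NNPP. intro HnP.
    assert (is_upper_bound A s).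
    { intros t [Ht Ht2]. destruct (Rle_lt_dec t s); auto. exfalso. apply HnP, Ht2. lra. }
    specialize (Hlub s H). lra. }
  assert (Pm : P m).
  { destruct (Req_dec m a) as [E|E]. subst; auto. apply HL. lra. auto. }
  assert (Am : A m).
  { split. lra. intros r Hr. destruct (Req_dec r m). subst; auto. apply Hbelow; lra. }
  destruct (Req_dec m b) as [Emb|Emb].
  - intros s Hs. destruct Am as [_ Am]. apply Am. lra.
  - exfalso. destruct (HR m ltac:(lra) Pm) as [d [Hd Hs]].
    pose proof (Rmin_l (m + d/2) b); pose proof (Rmin_r (m + d/2) b).
    assert (m < Rmin (m + d/2) b) by (apply Rmin_glb_lt; lra).
    set (s := Rmin (m + d/2) b) in *.
    assert (A s).
    {
      split. lra. intros r Hr. destruct (Rle_lt_dec r m).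
      - apply Am. lra.
      - apply Hs; lra. }
    specialize (Hub s H2). lra.
Qed.

Lemma conn_int (U V : pt -> Prop) (g : R -> pt) a b : open2 U -> open2 V -> a <= b ->
  (forall t, a <= t <= b -> forall eps, eps > 0 -> exists d, d > 0 /\
     forall s, a <= s <= b -> Rabs (s - t) < d -> dist2 (g t) (g s) < eps) ->
  (forall s, a <= s <= b -> U (g s) \/ V (g s)) ->
  (forall s, a <= s <= b -> U (g s) -> V (g s) -> False) ->
  U (g a) -> forall s, a <= s <= b -> U (g s).
Proof.
  intros HU HV Hab Hc Hcov Hdis Ua.
  apply real_ind; auto.
  - intros m Hm Hbel. destruct (Hcov m ltac:(lra)) as [|Vm]; auto. exfalso.
    destruct (HV _ Vm) as [e [He HVe]]. destruct (Hc m ltac:(lra) e He) as [d [Hd Hd2]].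
    set (s := Rmax a (m - d/2)).
    assert (a <= s) by apply Rmax_l.
    assert (s < m) by (unfold s; apply Rmax_lub_lt; lra).
    assert (m - d/2 <= s) by apply Rmax_r.
    apply (Hdis s ltac:(lra)). apply Hbel; lra. apply HVe. apply Hd2. lra.
    rewrite Rabs_left by lra. lra.
  - intros m Hm Um. destruct (HU _ Um) as [e [He HUe]]. destruct (Hc m ltac:(lra) e He) as [d [Hd Hd2]].
    exists d. split; auto. intros s Hs Hsb. apply HUe. apply Hd2. lra.
    rewrite Rabs_right by lra. lra.
Qed.

Lemma conn_int_any (U V : pt -> Prop) (g : R -> pt) a b : open2 U -> open2 V -> a <= b ->
  (forall t, a <= t <= b -> forall eps, eps > 0 -> exists d, d > 0 /\
     forall s, a <= s <= b -> Rabs (s - t) < d -> dist2 (g t) (g s) < eps) ->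
  (forall s, a <= s <= b -> U (g s) \/ V (g s)) ->
  (forall s, a <= s <= b -> U (g s) -> V (g s) -> False) ->
  forall s0, a <= s0 <= b -> U (g s0) -> forall s, a <= s <= b -> U (g s).
Proof.
  intros HU HV Hab Hc Hcov Hdis s0 Hs0 U0.
  destruct (Hcov a ltac:(lra)) as [Ua|Va].
  - apply conn_int with V; auto.
  - exfalso. assert (forall s, a <= s <= b -> V (g s)).
    { apply conn_int with U; auto. intros s Hs. destruct (Hcov s Hs); auto.
      intros s Hs H1 H2; eapply Hdis; eauto. }
    apply (Hdis s0 Hs0 U0 (H s0 Hs0)).
Qed.

Lemma ivt (f : R -> R) a b c : a <= b ->
  (forall t, a <= t <= b -> forall eps, eps > 0 -> exists d, d > 0 /\
     forall s, a <= s <= b -> Rabs (s - t) < d -> Rabs (f s - f t) < eps) ->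
  f a < c -> c < f b -> exists t, a <= t <= b /\ f t = c.
Proof.
  intros Hab Hc Ha Hb. apply NNPP. intro Hn.
  assert (Hne : forall t, a <= t <= b -> f t <> c) by (intros t Ht E; apply Hn; eauto).
  assert (forall s, a <= s <= b -> f s < c).
  { apply real_ind; auto.
    - intros m Hm Hbel. destruct (Rlt_le_dec (f m) c) as [|Hge]; auto. exfalso.
      assert (Hgt : f m > c) by (pose proof (Hne m ltac:(lra)); lra).
      destruct (Hc m ltac:(lra) (f m - c) ltac:(lra)) as [d [Hd Hd2]].
      set (s := Rmax a (m - d/2)).
      assert (a <= s) by apply Rmax_l.
      assert (s < m) by (unfold s; apply Rmax_lub_lt; lra).
      assert (m - d/2 <= s) by apply Rmax_r.
      specialize (Hd2 s ltac:(lra) ltac:(rewrite Rabs_left by lra; lra)).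
      specialize (Hbel s ltac:(lra)). unfold Rabs in Hd2; destruct Rcase_abs; lra.
    - intros m Hm Hfm. destruct (Hc m ltac:(lra) (c - f m) ltac:(lra)) as [d [Hd Hd2]].
      exists d. split; auto. intros s Hs Hsb.
      specialize (Hd2 s ltac:(lra) ltac:(rewrite Rabs_right by lra; lra)).
      unfold Rabs in Hd2; destruct Rcase_abs; lra. }
  specialize (H b ltac:(lra)). lra.
Qed.


Lemma INR_2n n : INR (2*n) = 2 * INR n.
Proof. rewrite mult_INR. simpl. ring. Qed.
Lemma INR_2n1 n : INR (2*n+1) = 2 * INR n + 1.
Proof. rewrite plus_INR, mult_INR. simpl. ring. Qed.
Lemma INR_2nm1 n : (1 <= n)%nat -> INR (2*n-1) = 2 * INR n - 1.
Proof. intro. rewrite minus_INR by lia. rewrite mult_INR. simpl. ring. Qed.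
Lemma INR_ge1 n : (1 <= n)%nat -> 1 <= INR n.
Proof. intro. apply (le_INR 1 n) in H. simpl in H. exact H. Qed.
Lemma no_between a b : INR a < INR b -> INR b < INR a + 1 -> False.
Proof. intros H1 H2. apply INR_lt in H1. apply le_INR in H1. rewrite S_INR in H1. lra. Qed.

Lemma inv_inv1 x : x <> 0 -> 1 / (1 / x) = x.
Proof. intro. field. auto. Qed.
Lemma le_inv_r x a : 0 < x -> 0 < a -> (x <= 1 / a <-> a <= 1 / x).
Proof. intros Hx Ha. split; intro H.
  - rewrite <- (inv_inv1 a) by lra. unfold Rdiv; rewrite !Rmult_1_l.
    apply Rinv_le_contravar. auto. unfold Rdiv in H. lra.
  - rewrite <- (inv_inv1 x) by lra. unfold Rdiv; rewrite !Rmult_1_l.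
    apply Rinv_le_contravar. auto. unfold Rdiv in H. lra. Qed.
Lemma le_inv_l x a : 0 < x -> 0 < a -> (1 / a <= x <-> 1 / x <= a).
Proof. intros Hx Ha. split; intro H.
  - rewrite <- (inv_inv1 a) by lra. unfold Rdiv; rewrite !Rmult_1_l.
    apply Rinv_le_contravar. apply Rinv_0_lt_compat; auto. unfold Rdiv in H. lra.
  - rewrite <- (inv_inv1 x) by lra. unfold Rdiv; rewrite !Rmult_1_l.
    apply Rinv_le_contravar. apply Rinv_0_lt_compat; auto. unfold Rdiv in H. lra. Qed.
Lemma lt_inv_r x a : 0 < x -> 0 < a -> (x < 1 / a <-> a < 1 / x).
Proof. intros Hx Ha. pose proof (le_inv_l x a Hx Ha). split; intro H1.
  - destruct (Rlt_le_dec a (1/x)); auto. apply H in r. lra.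
  - destruct (Rlt_le_dec x (1/a)); auto. apply H in r. lra. Qed.
Lemma lt_inv_l x a : 0 < x -> 0 < a -> (1 / a < x <-> 1 / x < a).
Proof. intros Hx Ha. pose proof (le_inv_r x a Hx Ha). split; intro H1.
  - destruct (Rlt_le_dec (1/x) a); auto. apply H in r. lra.
  - destruct (Rlt_le_dec (1/a) x); auto. apply H in r. lra. Qed.
Lemma inv_pos x : 0 < x -> 0 < 1 / x.
Proof. intro. unfold Rdiv. rewrite Rmult_1_l. apply Rinv_0_lt_compat; auto. Qed.

Definition tform (x y : R) : Prop :=
  0 <= y <= 1 /\
  ((exists n, (1 <= n)%nat /\ 1 / x = INR n) \/
   (exists n, (1 <= n)%nat /\ 2 * INR n - 1 <= 1 / x <= 2 * INR n /\ y = 1) \/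
   (exists n, (1 <= n)%nat /\ 2 * INR n <= 1 / x <= 2 * INR n + 1 /\ y = 0)).

Lemma E_tform p : E p -> fst p > 0 -> tform (fst p) (snd p).
Proof.
  destruct p as [x y]. simpl. intros HE Hx. destruct HE as [[H0 _]|[n [Hn H]]]. simpl in *; lra.
  cbn [fst snd] in H. pose proof (INR_ge1 n Hn).
  destruct H as [[Hv Hy]|[[Hb Hy]|[Hb Hy]]].
  - split; auto. left. exists n. split; auto. rewrite Hv. apply inv_inv1. lra.
  - rewrite INR_2n, INR_2nm1 in Hb by auto. split. lra. right; left. exists n.
    split; auto. split; auto. destruct Hb as [Hb1 Hb2].
    split. apply le_inv_r; auto; lra. apply le_inv_l; auto; lra.
  - rewrite INR_2n, INR_2n1 in Hb. split. lra. right; right. exists n.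
    split; auto. split; auto. destruct Hb as [Hb1 Hb2].
    split. apply le_inv_r; auto; lra. apply le_inv_l; auto; lra.
Qed.

Lemma E_of_tform x y : x > 0 -> tform x y -> E (x, y).
Proof.
  intros Hx [Hy H]. unfold E; cbn [fst snd]. right.
  destruct H as [[n [Hn Hv]]|[[n [Hn [Hb Hy1]]]|[n [Hn [Hb Hy0]]]]]; exists n; split; auto;
   pose proof (INR_ge1 n Hn).
  - left. split; auto. rewrite <- Hv. rewrite inv_inv1; lra.
  - right; left. split; auto. rewrite INR_2n, INR_2nm1 by auto. destruct Hb.
    split. apply le_inv_l; auto; lra. apply le_inv_r; auto; lra.
  - right; right. split; auto. rewrite INR_2n, INR_2n1. destruct Hb.
    split. apply le_inv_l; auto; lra. apply le_inv_r; auto; lra.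
Qed.

Lemma E_square p : E p -> square p.
Proof.
  intro HE. destruct (Rle_lt_dec (fst p) 0).
  - destruct HE as [[H0 Hy]|[n [Hn H]]]. split; lra.
    exfalso. pose proof (INR_ge1 n Hn).
    destruct H as [[Hv Hy]|[[Hb Hy]|[Hb Hy]]].
    + pose proof (inv_pos (INR n)). lra.
    + rewrite INR_2n in Hb. pose proof (inv_pos (2*INR n)). lra.
    + rewrite INR_2n1 in Hb. pose proof (inv_pos (2*INR n+1)). lra.
  - destruct (E_tform p HE r) as [Hy H]. split; auto. split. lra.
    assert (1 <= 1 / fst p).
    { destruct H as [[n [Hn Hv]]|[[n [Hn [Hb _]]]|[n [Hn [Hb _]]]]]; pose proof (INR_ge1 n Hn); lra. }
    apply (le_inv_r (fst p) 1) in H0; lra.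
Qed.

Lemma between_top p j : E p -> (1 <= j)%nat -> 2 * INR j - 1 < 1 / fst p < 2 * INR j -> fst p > 0 -> snd p = 1.
Proof.
  intros HE Hj Ht Hx. destruct (E_tform p HE Hx) as [Hy H].
  destruct H as [[n [Hn Hv]]|[[n [Hn [Hb Hy1]]]|[n [Hn [Hb Hy0]]]]]; auto.
  - exfalso. rewrite Hv in Ht. apply (no_between (2*j-1) n); rewrite INR_2nm1 by auto; lra.
  - exfalso. apply (no_between n j). lra. lra.
Qed.

Lemma between_bot p j : E p -> (1 <= j)%nat -> 2 * INR j < 1 / fst p < 2 * INR j + 1 -> fst p > 0 -> snd p = 0.
Proof.
  intros HE Hj Ht Hx. destruct (E_tform p HE Hx) as [Hy H].
  destruct H as [[n [Hn Hv]]|[[n [Hn [Hb Hy1]]]|[n [Hn [Hb Hy0]]]]]; auto.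
  - exfalso. rewrite Hv in Ht. apply (no_between (2*j) n); rewrite INR_2n; lra.
  - exfalso. apply (no_between j n). lra. lra.
Qed.


Definition rect a b c d (p : pt) : Prop := a <= fst p <= b /\ c <= snd p <= d.

Lemma not_closed_ball (A : pt -> Prop) p : closed2 A -> ~ A p ->
  exists e, e > 0 /\ forall q, A q -> dist2 p q >= e.
Proof.
  intros HA Hn. apply NNPP. intro H. apply Hn, HA. intros eps He. apply NNPP. intro H2.
  apply H. exists eps. split; auto. intros q Hq. destruct (Rlt_le_dec (dist2 p q) eps); [|lra].
  exfalso; apply H2; eauto.
Qed.

Lemma closed_union A B : closed2 A -> closed2 B -> closed2 (fun p => A p \/ B p).
Proof.
  intros HA HB p Hp. apply NNPP. intro Hn.
  destruct (not_closed_ball A p HA (fun h => Hn (or_introl h))) as [e1 [He1 H1]].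
  destruct (not_closed_ball B p HB (fun h => Hn (or_intror h))) as [e2 [He2 H2]].
  destruct (Hp (Rmin e1 e2) (Rmin_pos _ _ He1 He2)) as [q [[Aq|Bq] Hq]].
  - specialize (H1 q Aq). pose proof (Rmin_l e1 e2). lra.
  - specialize (H2 q Bq). pose proof (Rmin_r e1 e2). lra.
Qed.

Lemma closed_rect a b c d : closed2 (rect a b c d).
Proof.
  intros p Hp. unfold rect.
  assert (forall (f : pt -> R), (forall p q, Rabs (f p - f q) <= dist2 p q) -> forall lo hi,
     (forall q, rect a b c d q -> lo <= f q <= hi) -> lo <= f p <= hi).
  { intros f Hf lo hi Hq. split.
    - apply NNPP; intro. destruct (Hp (lo - f p)) as [q [Aq Dq]]. lra.
      specialize (Hq q Aq). specialize (Hf p q). unfold Rabs in Hf; destruct Rcase_abs; lra.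
    - apply NNPP; intro. destruct (Hp (f p - hi)) as [q [Aq Dq]]. lra.
      specialize (Hq q Aq). specialize (Hf p q). unfold Rabs in Hf; destruct Rcase_abs; lra. }
  split.
  - apply (H fst d_fst). intros q [Hq _]; auto.
  - apply (H snd d_snd). intros q [_ Hq]; auto.
Qed.

Definition Vp n := rect (1 / INR n) (1 / INR n) 0 1.
Definition Tp n := rect (1 / INR (2*n)) (1 / INR (2*n-1)) 1 1.
Definition Bp n := rect (1 / INR (2*n+1)) (1 / INR (2*n)) 0 0.
Fixpoint FF (N : nat) : pt -> Prop :=
  match N with
  | O => rect 0 0 0 1
  | S M => fun p => FF M p \/ Vp (S M) p \/ Tp (S M) p \/ Bp (S M) p
  end.

Lemma FF_closed N : closed2 (FF N).
Proof.
  induction N; simpl. apply closed_rect.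
  repeat apply closed_union; auto; apply closed_rect.
Qed.

Lemma FF_E N p : FF N p -> E p.
Proof.
  revert p. induction N; intros p H; simpl in H.
  - destruct H as [H1 H2]. left. split; lra.
  - destruct H as [H|[H|[H|H]]]; auto; destruct H as [H1 H2]; right; exists (S N); split; try lia.
    + left. split; lra.
    + right; left. split; lra.
    + right; right. split; lra.
Qed.

Lemma FF_mono N M p : (N <= M)%nat -> FF N p -> FF M p.
Proof. intro H. induction H; auto. intro. simpl. left; auto. Qed.

Lemma FF_in N n p : (1 <= n <= N)%nat -> Vp n p \/ Tp n p \/ Bp n p -> FF N p.
Proof.
  intros Hn H. apply (FF_mono n N); [lia|]. destruct n. lia. simpl. right. auto.
Qed.

Lemma inv_lt_nat a b : (1 <= a)%nat -> (1 <= b)%nat -> 1 / INR a < 1 / INR b -> (b < a)%nat.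
Proof.
  intros Ha Hb H. pose proof (INR_ge1 a Ha); pose proof (INR_ge1 b Hb).
  apply (lt_inv_l (1 / INR b) (INR a)) in H; try (apply inv_pos); try lra.
  rewrite inv_inv1 in H by lra. apply INR_lt; auto.
Qed.

Lemma E_closed : closed2 E.
Proof.
  intros p Hp.
  assert (Sq : rect 0 1 0 1 p).
  { apply closed_rect. intros eps He. destruct (Hp eps He) as [q [Eq Dq]]. exists q. split; auto.
    apply E_square; auto. }
  destruct Sq as [Hx Hy].
  destruct (Rle_lt_dec (fst p) 0). { left. split; lra. }
  destruct (INR_unbounded (2 / fst p)) as [N HN].
  assert (HN1 : (1 <= N)%nat).
  { destruct N. simpl in HN. assert (0 < 2 / fst p) by (apply Rdiv_lt_0_compat; lra). lra. lia. }
  pose proof (INR_ge1 N HN1).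
  assert (Hinv : 1 / INR N < fst p / 2).
  { apply lt_inv_l. lra. lra. replace (1 / (fst p / 2)) with (2 / fst p) by (field; lra). lra. }
  apply (FF_E N). apply FF_closed. intros eps He.
  destruct (Hp (Rmin eps (fst p / 2))) as [q [Eq Dq]]. apply Rmin_pos; lra.
  exists q. split. 2:{ pose proof (Rmin_l eps (fst p / 2)); lra. }
  pose proof (Rmin_r eps (fst p / 2)). pose proof (d_fst p q).
  assert (Hq : fst q > 1 / INR N) by (unfold Rabs in H1; destruct Rcase_abs; lra).
  destruct Eq as [[Hz _]|[n [Hn HH]]]. { pose proof (inv_pos (INR N)); lra. }
  cbn [fst snd] in HH.
  destruct HH as [[Hv Hy']|[[Hb Hy']|[Hb Hy']]].
  - apply (FF_in N n). split; auto. apply Nat.lt_le_incl. apply inv_lt_nat; auto. lra.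
    left. unfold Vp, rect. split; lra.
  - apply (FF_in N n). split; auto. assert (2*n-1 < N)%nat. apply inv_lt_nat; auto; lia || lra. lia.
    right; left. unfold Tp, rect. split; lra.
  - apply (FF_in N n). split; auto. assert (2*n < N)%nat. apply inv_lt_nat; auto; lia || lra. lia.
    right; right. unfold Bp, rect. split; lra.
Qed.


Lemma inv_le_nat a b : (1 <= a <= b)%nat -> 1 / INR b <= 1 / INR a.
Proof.
  intro H. pose proof (INR_ge1 a ltac:(lia)). pose proof (le_INR a b ltac:(lia)).
  unfold Rdiv; rewrite !Rmult_1_l. apply Rinv_le_contravar; lra.
Qed.

Lemma E_vert n y : (1 <= n)%nat -> 0 <= y <= 1 -> E (1 / INR n, y).
Proof. intros. right. exists n. split; [auto|]. left. cbn. auto. Qed.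
Lemma E_top n x : (1 <= n)%nat -> 1 / INR (2*n) <= x <= 1 / INR (2*n-1) -> E (x, 1).
Proof. intros. right. exists n. split; [auto|]. right; left. cbn [fst snd]. split; auto. Qed.
Lemma E_bot n x : (1 <= n)%nat -> 1 / INR (2*n+1) <= x <= 1 / INR (2*n) -> E (x, 0).
Proof. intros. right. exists n. split; [auto|]. right; right. cbn [fst snd]. split; auto. Qed.

Section Conn.
Variables U V : pt -> Prop.
Hypothesis HU : open2 U.
Hypothesis HV : open2 V.
Hypothesis Hcov : forall p, E p -> U p \/ V p.
Hypothesis Hdis : forall p, E p -> U p -> V p -> False.

Lemma vert_all x0 y0 : (forall y, 0 <= y <= 1 -> E (x0, y)) -> 0 <= y0 <= 1 -> U (x0, y0) ->
  forall y, 0 <= y <= 1 -> U (x0, y).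
Proof.
  intros HE Hy0 U0. apply (conn_int_any U V (fun s => (x0, s)) 0 1 HU HV ltac:(lra)) with (s0 := y0); auto.
  - intros t Ht eps He. exists eps. split; auto. intros s Hs Hd. rewrite d_vert by reflexivity.
    simpl. rewrite Rabs_minus_sym. auto.
  - intros s Hs H1 H2. eapply Hdis; eauto.
Qed.

Lemma horiz_all a b c x0 : a <= b -> (forall x, a <= x <= b -> E (x, c)) -> a <= x0 <= b -> U (x0, c) ->
  forall x, a <= x <= b -> U (x, c).
Proof.
  intros Hab HE Hx0 U0. apply (conn_int_any U V (fun s => (s, c)) a b HU HV Hab) with (s0 := x0); auto.
  - intros t Ht eps He. exists eps. split; auto. intros s Hs Hd. rewrite d_horiz by reflexivity.
    simpl. rewrite Rabs_minus_sym. auto.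
  - intros s Hs H1 H2. eapply Hdis; eauto.
Qed.

Hypothesis U10 : U (1, 0).

Lemma Qn : forall n, (1 <= n)%nat -> forall y, 0 <= y <= 1 -> U (1 / INR n, y).
Proof.
  induction n as [|m IH]; intros Hn. lia.
  destruct (Nat.eq_dec m 0) as [->|Hm].
  - apply (vert_all _ 0). intros; apply E_vert; auto. lra.
    replace (1 / INR 1) with 1 by (simpl; field). auto.
  - specialize (IH ltac:(lia)).
    destruct (Nat.Even_or_Odd m) as [[k Hk]|[k Hk]].
    +
      assert (Hk1 : (1 <= k)%nat) by lia.
      assert (HB : forall x, 1 / INR (2*k+1) <= x <= 1 / INR (2*k) -> U (x, 0)).
      { apply (horiz_all _ _ _ (1 / INR (2*k))). apply inv_le_nat; lia.
        intros; eapply E_bot; eauto. split; [apply inv_le_nat; lia| lra].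
        rewrite <- Hk. apply IH. lra. }
      apply (vert_all _ 0). intros; apply E_vert; auto. lra.
      replace (S m) with (2*k+1)%nat by lia. apply HB. split; [lra| apply inv_le_nat; lia].
    + assert (HB : forall x, 1 / INR (2*(k+1)) <= x <= 1 / INR (2*(k+1)-1) -> U (x, 1)).
      { apply (horiz_all _ _ _ (1 / INR (2*(k+1)-1))). apply inv_le_nat; lia.
        intros; eapply E_top. 2: eauto. lia. split; [apply inv_le_nat; lia| lra].
        replace (2*(k+1)-1)%nat with m by lia. apply IH. lra. }
      apply (vert_all _ 1). intros; apply E_vert; auto. lra.
      replace (S m) with (2*(k+1))%nat by lia. apply HB. split; [lra| apply inv_le_nat; lia].
Qed.

Lemma U00 : U (0, 0).
Proof.
  destruct (Hcov (0,0)) as [|V0]; auto. left. simpl. lra. exfalso.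
  destruct (HV _ V0) as [e [He HVe]].
  destruct (INR_unbounded (1 / e)) as [n Hn].
  assert (Hn1 : (1 <= n)%nat).
  { destruct n. simpl in Hn. pose proof (inv_pos e He). lra. lia. }
  pose proof (INR_ge1 n Hn1).
  assert (Hlt : 1 / INR n < e).
  { apply (proj2 (lt_inv_l e (INR n) He ltac:(lra))). lra. }
  apply (Hdis (1 / INR n, 0)). apply E_vert; auto; lra. apply Qn; auto; lra.
  apply HVe. rewrite d_horiz by reflexivity. simpl. rewrite Rabs_left; pose proof (inv_pos (INR n)); lra.
Qed.

Lemma all_in : forall p, E p -> U p.
Proof.
  intros p HE. destruct p as [x y].
  destruct HE as [[Hx Hy]|[n [Hn H]]]; cbn [fst snd] in *.
  - subst x. apply (vert_all 0 0). intros; left; simpl; split; auto. lra. apply U00. auto.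
  - destruct H as [[Hv Hy]|[[Hb Hy]|[Hb Hy]]].
    + subst x. apply Qn; auto.
    + subst y. apply (horiz_all (1 / INR (2*n)) (1 / INR (2*n-1)) 1 (1 / INR (2*n-1))). lra.
      intros; eapply E_top; eauto. lra. apply Qn. lia. lra. auto.
    + subst y. apply (horiz_all (1 / INR (2*n+1)) (1 / INR (2*n)) 0 (1 / INR (2*n))). lra.
      intros; eapply E_bot; eauto. lra. apply Qn. lia. lra. auto.
Qed.
End Conn.

Lemma E_connected : connected2 E.
Proof.
  intros [U [V [HU [HV [Hcov [[p [Ep Up]] [[q [Eq Vq]] Hdis]]]]]]].
  assert (E10 : E (1, 0)).
  { replace 1 with (1 / INR 1) by (simpl; field). apply E_vert; auto. lra. }
  destruct (Hcov _ E10) as [U1|V1].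
  - apply (Hdis q Eq); auto. apply (all_in U V); auto.
  - apply (Hdis p Ep); auto. apply (all_in V U); auto.
    intros r Er. destruct (Hcov r Er); auto. intros r Er H1 H2. eapply Hdis; eauto.
Qed.


Lemma big_j x : x > 0 -> exists j, (1 <= j)%nat /\ 1 / x < 2 * INR j - 1.
Proof.
  intro Hx. destruct (INR_unbounded (1 / x)) as [n Hn].
  exists (S n). split. lia. rewrite S_INR. pose proof (pos_INR n). lra.
Qed.

Lemma inv_eq_t c t : t > 0 -> c = 1 / t -> 1 / c = t.
Proof. intros Ht ->. apply inv_inv1. lra. Qed.

Lemma E_not_arc : ~ arcwise_connected2 E.
Proof.
  intro H.
  assert (E00 : E (0,0)) by (left; simpl; lra).
  assert (E10 : E (1, 0)).
  { replace 1 with (1 / INR 1) by (simpl; field). apply E_vert; auto. lra. }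
  destruct (H (0,0) (1,0) E00 E10) as [g [[HE [Hc _]] [H0 H1]]].
  { intro Heq. injection Heq. lra. }
  assert (Hcf : forall t, 0 <= t <= 1 -> forall eps, eps > 0 -> exists d, d > 0 /\
     forall s, 0 <= s <= 1 -> Rabs (s - t) < d -> Rabs (fst (g s) - fst (g t)) < eps).
  { intros t Ht eps He. destruct (Hc t Ht eps He) as [d [Hd Hd2]]. exists d. split; auto.
    intros s Hs Hst. specialize (Hd2 s Hs Hst). pose proof (d_fst (g s) (g t)). lra. }
  assert (Hnn : forall t, 0 <= t <= 1 -> 0 <= fst (g t)).
  { intros t Ht. destruct (E_square _ (HE t Ht)). lra. }
  assert (forall s, 0 <= s <= 1 -> fst (g s) = 0).
  { apply real_ind. lra. rewrite H0; reflexivity.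
    - intros m Hm Hbel. apply NNPP. intro Hne.
      assert (Hp : fst (g m) > 0) by (pose proof (Hnn m ltac:(lra)); lra).
      destruct (Hcf m ltac:(lra) (fst (g m)) Hp) as [d [Hd Hd2]].
      pose proof (Rmax_l 0 (m - d/2)); pose proof (Rmax_r 0 (m - d/2)).
      assert (Rmax 0 (m - d/2) < m) by (apply Rmax_lub_lt; lra).
      set (s := Rmax 0 (m - d/2)) in *.
      specialize (Hd2 s ltac:(lra) ltac:(rewrite Rabs_left by lra; lra)).
      rewrite (Hbel s ltac:(lra)) in Hd2. rewrite Rabs_minus_sym, Rminus_0_r, Rabs_right in Hd2 by lra. lra.
    - intros m Hm Hgm. destruct (Hc m ltac:(lra) (1/2) ltac:(lra)) as [d [Hd Hd2]].
      exists d. split; auto. intros s Hs Hs1. apply NNPP. intro Hne.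
      assert (Hx1 : fst (g s) > 0) by (pose proof (Hnn s ltac:(lra)); lra).
      destruct (big_j _ Hx1) as [j [Hj Hj2]].
      pose proof (INR_ge1 j Hj).
      assert (Hx1' : 1 / fst (g s) > 0) by (apply inv_pos; lra).
      assert (Hc1 : 1 / (2 * INR j - 1/2) < fst (g s)).
      { apply lt_inv_l. lra. lra. lra. }
      assert (Hc2 : 1 / (2 * INR j + 1/2) < fst (g s)).
      { apply lt_inv_l. lra. lra. lra. }
      assert (Hcf' : forall t, m <= t <= s -> forall eps, eps > 0 -> exists d, d > 0 /\
        forall s', m <= s' <= s -> Rabs (s' - t) < d -> Rabs (fst (g s') - fst (g t)) < eps).
      { intros t Ht eps He. destruct (Hcf t ltac:(lra) eps He) as [d' [Hd' Hd'2]]. exists d'.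
        split; auto. intros s' Hs'. apply Hd'2. lra. }
      destruct (ivt (fun t => fst (g t)) m s (1 / (2 * INR j - 1/2)) ltac:(lra) Hcf') as [t1 [Ht1 Ht1e]].
      { rewrite Hgm. apply inv_pos. lra. } auto.
      destruct (ivt (fun t => fst (g t)) m s (1 / (2 * INR j + 1/2)) ltac:(lra) Hcf') as [t2 [Ht2 Ht2e]].
      { rewrite Hgm. apply inv_pos. lra. } auto.
      simpl in Ht1e, Ht2e.
      assert (Y1 : snd (g t1) = 1).
      { apply (between_top _ j (HE t1 ltac:(lra)) Hj). rewrite (inv_eq_t _ (2 * INR j - 1/2) ltac:(lra) Ht1e). lra.
        rewrite Ht1e. apply inv_pos; lra. }
      assert (Y2 : snd (g t2) = 0).
      { apply (between_bot _ j (HE t2 ltac:(lra)) Hj). rewrite (inv_eq_t _ (2 * INR j + 1/2) ltac:(lra) Ht2e). lra.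
        rewrite Ht2e. apply inv_pos; lra. }
      assert (D1 := Hd2 t1 ltac:(lra) ltac:(rewrite Rabs_right by lra; lra)).
      assert (D2 := Hd2 t2 ltac:(lra) ltac:(rewrite Rabs_right by lra; lra)).
      pose proof (d_snd (g t1) (g m)). pose proof (d_snd (g t2) (g m)).
      match goal with H: Rabs (snd (g t1) - _) <= _ |- _ => rewrite Y1 in H end.
      match goal with H: Rabs (snd (g t2) - _) <= _ |- _ => rewrite Y2 in H end.
      assert (A1 : Rabs (1 - snd (g m)) < 1/2) by lra.
      assert (A2 : Rabs (0 - snd (g m)) < 1/2) by lra.
      clear - A1 A2. unfold Rabs in A1, A2; destruct Rcase_abs; destruct Rcase_abs; lra. }
  specialize (H2 1 ltac:(lra)). rewrite H1 in H2. simpl in H2. lra.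
Qed.

Lemma E_not_lc : ~ locally_connected2 E.
Proof.
  intro H.
  assert (Ep : E (0, 1/2)) by (left; simpl; lra).
  set (U := fun q : pt => Rabs (snd q - 1/2) < 1/4).
  assert (HU : open2 U).
  { intros q Hq. exists (1/4 - Rabs (snd q - 1/2)). split. unfold U in Hq; lra.
    intros q' Hq'. unfold U. pose proof (d_snd q q').
    pose proof (Rabs_triang (snd q' - snd q) (snd q - 1/2)).
    replace (snd q' - snd q + (snd q - 1/2)) with (snd q' - 1/2) in H1 by ring.
    rewrite Rabs_minus_sym in H0. lra. }
  assert (Up : U (0, 1/2)) by (unfold U; simpl; rewrite Rminus_diag, Rabs_R0; lra).
  destruct (H (0, 1/2) U Ep HU Up) as [V [HV [Vp [Hsub Hconn]]]].
  destruct (HV _ Vp) as [e [He HVe]].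
  destruct (big_j e He) as [j [Hj Hj2]]. pose proof (INR_ge1 j Hj).
  set (c := 1 / (2 * INR j - 1/2)).
  assert (Hc0 : 0 < c) by (apply inv_pos; lra).
  assert (Hq0E : E (1 / INR (2*j-1), 1/2)) by (apply E_vert; [lia|lra]).
  rewrite INR_2nm1 in Hq0E by auto.
  assert (Hx0 : c < 1 / (2 * INR j - 1)).
  { unfold c. apply lt_inv_r. apply inv_pos; lra. lra. rewrite inv_inv1 by lra. lra. }
  assert (Hx0e : 1 / (2 * INR j - 1) < e).
  { apply lt_inv_l. lra. lra. lra. }
  apply Hconn. exists (fun q => fst q < c), (fun q => fst q > c). split; [|split; [|split; [|split; [|split]]]].
  - intros q Hq. exists (c - fst q). split. lra. intros q' Hq'. pose proof (d_fst q q').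
    unfold Rabs in H1; destruct Rcase_abs; lra.
  - intros q Hq. exists (fst q - c). split. lra. intros q' Hq'. pose proof (d_fst q q').
    unfold Rabs in H1; destruct Rcase_abs; lra.
  - intros q [Eq Vq]. destruct (Rtotal_order (fst q) c) as [|[Heq|]]; auto. exfalso.
    assert (Y : snd q = 1).
    { apply (between_top q j Eq Hj). rewrite Heq. unfold c. rewrite inv_inv1 by lra. lra. lra. }
    specialize (Hsub q Eq Vq). unfold U in Hsub. rewrite Y in Hsub.
    unfold Rabs in Hsub; destruct Rcase_abs; lra.
  - exists (0, 1/2). simpl. split; auto.
  - exists (1 / (2 * INR j - 1), 1/2). simpl. split; auto. split; auto. apply HVe.
    rewrite d_horiz by reflexivity. simpl. rewrite Rminus_0_l, Rabs_Ropp, Rabs_right. lra.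
    apply Rle_ge. left. apply inv_pos. lra.
  - intros q _ H1 H2. lra.
Qed.


Definition clampy (y : R) := Rmax 0 (Rmin 1 y).
Definition bw (w y : R) := Rmax (-1/2) (Rmin (1/2) (w * (1 + y))).
Definition byy (w y : R) := Rmax 0 (y - Rmin 1 (Rmax 0 (2 - 4 * Rabs w))).
Definition HH (k : nat) (t y : R) : pt :=
  if Nat.even k then (INR k + 1/2 + bw (t - INR k - 1/2) (clampy y), byy (t - INR k - 1/2) (clampy y))
  else (INR k + 1/2 + bw (t - INR k - 1/2) (1 - clampy y), 1 - byy (t - INR k - 1/2) (1 - clampy y)).

Definition fl (t : R) : nat := epsilon (inhabits 0%nat) (fun k => INR k <= t < INR k + 1).

Lemma fl_ex t : 0 <= t -> exists k, INR k <= t < INR k + 1.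
Proof.
  intro Ht. destruct (INR_unbounded t) as [n Hn].
  assert (forall n, t < INR n -> exists k, INR k <= t < INR k + 1).
  { clear n Hn. induction n; intro H. simpl in H; lra.
    destruct (Rlt_le_dec t (INR n)). auto. exists n. rewrite S_INR in H. lra. }
  eauto.
Qed.

Lemma fl_spec t : 0 <= t -> INR (fl t) <= t < INR (fl t) + 1.
Proof. intro. unfold fl. apply epsilon_spec. apply fl_ex; auto. Qed.

Lemma fl_unique k t : INR k <= t < INR k + 1 -> fl t = k.
Proof.
  intro H. pose proof (fl_spec t ltac:(pose proof (pos_INR k); lra)).
  destruct (Nat.lt_trichotomy (fl t) k) as [L|[L|L]]; auto; exfalso.
  - apply le_INR in L. rewrite S_INR in L. lra.
  - apply le_INR in L. rewrite S_INR in L. lra.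
Qed.

Lemma rc_opp f : rcont f -> rcont (fun p => - f p).
Proof. intro H. apply (rc_minus (fun _ => 0) f (rc_const 0)) in H. intros p e He.
  destruct (H p e He) as [d [Hd H2]]. exists d; split; auto. intros q Hq. specialize (H2 q Hq).
  replace (- f q - - f p) with (0 - f q - (0 - f p)) by ring. auto. Qed.

Ltac rc := repeat (first [apply rc_fst | apply rc_snd | apply rc_minus | apply rc_plus | apply rc_opp
   | apply rc_mult | apply rc_max | apply rc_min | apply rc_abs | apply rc_const]).

Lemma HH_cont k p : ptc (fun q => HH k (fst q) (snd q)) p.
Proof. unfold HH, bw, byy, clampy. destruct (Nat.even k); apply ptc_pair; rc. Qed.

Lemma clampy_id y : 0 <= y <= 1 -> clampy y = y.
Proof. intro. unfold clampy, Rmax, Rmin. repeat destruct Rle_dec; lra. Qed.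
Lemma clampy_range y : 0 <= clampy y <= 1.
Proof. unfold clampy, Rmax, Rmin. repeat destruct Rle_dec; lra. Qed.

Lemma bw_left y : 0 <= y <= 1 -> bw (-1/2) y = -1/2.
Proof. intro. unfold bw, Rmax, Rmin. repeat destruct Rle_dec; lra. Qed.
Lemma bw_right y : 0 <= y <= 1 -> bw (1/2) y = 1/2.
Proof. intro. unfold bw, Rmax, Rmin. repeat destruct Rle_dec; lra. Qed.
Lemma byy_side w y : Rabs w = 1/2 -> 0 <= y <= 1 -> byy w y = y.
Proof. intros Hw Hy. unfold byy. rewrite Hw. unfold Rmax, Rmin. repeat destruct Rle_dec; lra. Qed.
Lemma bw_bar w : -1/2 <= w <= 1/2 -> bw w 0 = w.
Proof. intro. unfold bw, Rmax, Rmin. repeat destruct Rle_dec; lra. Qed.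
Lemma byy_bar w : byy w 0 = 0.
Proof. unfold byy, Rmax, Rmin. repeat destruct Rle_dec; lra. Qed.

Lemma HH_vert k y : HH k (INR k) y = (INR k, clampy y).
Proof.
  pose proof (clampy_range y). unfold HH. replace (INR k - INR k - 1/2) with (-1/2) by lra.
  assert (Rabs (-1/2) = 1/2) by (rewrite Rabs_left; lra).
  destruct (Nat.even k).
  - rewrite bw_left, byy_side by (auto; lra). f_equal; lra.
  - rewrite bw_left, byy_side by (auto; lra). f_equal; lra.
Qed.

Lemma HH_right k y : HH k (INR k + 1) y = (INR k + 1, clampy y).
Proof.
  pose proof (clampy_range y). unfold HH. replace (INR k + 1 - INR k - 1/2) with (1/2) by lra.
  assert (Rabs (1/2) = 1/2) by (rewrite Rabs_right; lra).
  destruct (Nat.even k).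
  - rewrite bw_right, byy_side by (auto; lra). f_equal; lra.
  - rewrite bw_right, byy_side by (auto; lra). f_equal; lra.
Qed.

Definition psi (p : pt) : pt := HH (fl (fst p)) (fst p) (snd p).

Lemma psi_eq k q : INR k <= fst q <= INR k + 1 -> psi q = HH k (fst q) (snd q).
Proof.
  intro H. unfold psi. destruct (Req_dec (fst q) (INR k + 1)) as [E1|E1].
  - rewrite E1. rewrite <- S_INR. rewrite (fl_unique (S k)) by lra.
    rewrite HH_vert. rewrite S_INR, HH_right. reflexivity.
  - rewrite (fl_unique k) by lra. reflexivity.
Qed.

Lemma psi_cont p : fst p >= 1 -> ptc psi p.
Proof.
  intros Hp eps He.
  pose proof (fl_spec (fst p) ltac:(lra)) as Hk. set (k := fl (fst p)) in *.
  destruct (HH_cont k p eps He) as [d1 [Hd1 H1]].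
  destruct (Rlt_le_dec (INR k) (fst p)) as [Hlt|Hle].
  - exists (Rmin d1 (Rmin (fst p - INR k) (INR k + 1 - fst p))). split.
    { repeat apply Rmin_pos; lra. }
    intros q Hq. pose proof (Rmin_l d1 (Rmin (fst p - INR k) (INR k + 1 - fst p))).
    pose proof (Rmin_r d1 (Rmin (fst p - INR k) (INR k + 1 - fst p))).
    pose proof (Rmin_l (fst p - INR k) (INR k + 1 - fst p)).
    pose proof (Rmin_r (fst p - INR k) (INR k + 1 - fst p)).
    pose proof (d_fst p q). assert (Hq' : Rabs (fst p - fst q) < fst p - INR k /\ Rabs (fst p - fst q) < INR k + 1 - fst p) by lra.
    rewrite (psi_eq k p), (psi_eq k q) by (unfold Rabs in Hq'; destruct Rcase_abs; lra).
    apply H1. lra.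
  - assert (Ek : INR k = fst p) by lra.
    assert (Hk1 : (1 <= k)%nat).
    { destruct k. simpl in *. lra. lia. }
    destruct (HH_cont (k - 1) p eps He) as [d2 [Hd2 H2]].
    assert (Ek1 : INR (k - 1) = INR k - 1) by (rewrite minus_INR by lia; simpl; ring).
    exists (Rmin (Rmin d1 d2) 1). split. { repeat apply Rmin_pos; lra. }
    intros q Hq. pose proof (Rmin_l (Rmin d1 d2) 1). pose proof (Rmin_r (Rmin d1 d2) 1).
    pose proof (Rmin_l d1 d2). pose proof (Rmin_r d1 d2). pose proof (d_fst p q).
    destruct (Rle_lt_dec (fst p) (fst q)).
    + rewrite (psi_eq k p), (psi_eq k q) by (unfold Rabs in *; destruct Rcase_abs; lra).
      apply H1. lra.
    + rewrite (psi_eq (k-1) p), (psi_eq (k-1) q) by (unfold Rabs in *; destruct Rcase_abs; lra).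
      apply H2. lra.
Qed.


Lemma retr w Y : 0 <= Y <= 1 ->
  -1/2 <= bw w Y <= 1/2 /\ 0 <= byy w Y <= 1 /\ (byy w Y = 0 \/ bw w Y = -1/2 \/ bw w Y = 1/2).
Proof.
  intro HY. split; [|split].
  - unfold bw, Rmax, Rmin. repeat destruct Rle_dec; lra.
  - unfold byy, Rmax, Rmin. pose proof (Rabs_pos w). repeat destruct Rle_dec; lra.
  - destruct (Req_dec (byy w Y) 0) as [|Hne]; [left; auto|right].
    assert (Hb : Y > 2 - 4 * Rabs w).
    { unfold byy, Rmax, Rmin in Hne. repeat destruct Rle_dec; lra. }
    unfold bw. destruct (abs_cases w) as [[Hw Ea]|[Hw Ea]]; rewrite Ea in Hb.
    + right. assert (w * (1 + Y) >= 1/2) by nra. unfold Rmax, Rmin. repeat destruct Rle_dec; lra.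
    + left. assert (w * (1 + Y) <= - (1/2)) by nra. unfold Rmax, Rmin. repeat destruct Rle_dec; lra.
Qed.

Definition tform_t (a b : R) : Prop :=
  0 <= b <= 1 /\
  ((exists n, (1 <= n)%nat /\ a = INR n) \/
   (exists n, (1 <= n)%nat /\ 2 * INR n - 1 <= a <= 2 * INR n /\ b = 1) \/
   (exists n, (1 <= n)%nat /\ 2 * INR n <= a <= 2 * INR n + 1 /\ b = 0)).

Lemma E_of_t a b : a >= 1 -> tform_t a b -> E (1 / a, b).
Proof.
  intros Ha H. apply E_of_tform. apply inv_pos; lra. unfold tform. rewrite inv_inv1 by lra. exact H.
Qed.

Lemma even_true k : Nat.even k = true -> exists n, k = (2*n)%nat.
Proof. intro H. apply Nat.even_spec in H. destruct H as [n Hn]. exists n. lia. Qed.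
Lemma even_false k : Nat.even k = false -> exists n, k = (2*n+1)%nat.
Proof.
  intro H. destruct (Nat.Even_or_Odd k) as [He|[n Hn]].
  - apply Nat.even_spec in He. congruence.
  - exists n. lia.
Qed.
Lemma even_2n n : Nat.even (2*n) = true.
Proof. apply Nat.even_spec. exists n. lia. Qed.
Lemma even_2n1 n : Nat.even (2*n+1) = false.
Proof. destruct (Nat.even (2*n+1)) eqn:E; auto. apply even_true in E. destruct E. lia. Qed.

Lemma HH_inE k t y : (1 <= k)%nat -> 1 <= fst (HH k t y) /\ tform_t (fst (HH k t y)) (snd (HH k t y)).
Proof.
  intro Hk. pose proof (INR_ge1 k Hk). pose proof (clampy_range y).
  unfold HH. destruct (Nat.even k) eqn:Ev.
  - destruct (retr (t - INR k - 1/2) (clampy y) H0) as [B1 [B2 B3]]. simpl.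
    split. lra. split. lra.
    destruct B3 as [B|[B|B]].
    + right; right. destruct (even_true k Ev) as [n Hn]. exists n.
      subst k. rewrite INR_2n in *. split. lia. lra.
    + left. exists k. split; auto. lra.
    + left. exists (S k). split. lia. rewrite S_INR. lra.
  - destruct (retr (t - INR k - 1/2) (1 - clampy y) ltac:(lra)) as [B1 [B2 B3]]. simpl.
    split. lra. split. lra.
    destruct B3 as [B|[B|B]].
    + right; left. destruct (even_false k Ev) as [n Hn]. exists (S n).
      split. lia. rewrite S_INR. subst k. rewrite INR_2n1 in *. lra.
    + left. exists k. split; auto. lra.
    + left. exists (S k). split. lia. rewrite S_INR. lra.
Qed.

Lemma HH_bar k t y : INR k <= t <= INR k + 1 -> y = (if Nat.even k then 0 else 1) -> HH k t y = (t, y).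
Proof.
  intros Ht Hy. unfold HH. destruct (Nat.even k); subst y.
  - rewrite clampy_id by lra. rewrite bw_bar by lra. rewrite byy_bar. f_equal. lra.
  - rewrite clampy_id by lra. replace (1 - 1) with 0 by lra. rewrite bw_bar by lra. rewrite byy_bar.
    f_equal; lra.
Qed.

Lemma inv_ge1 x : 0 < x <= 1 -> 1 <= 1 / x.
Proof. intro H. apply (proj1 (le_inv_r x 1 ltac:(lra) ltac:(lra))). replace (1/1) with 1 by field. lra. Qed.

Definition inv1 (p : pt) : pt := (1 / fst p, snd p).
Definition gg (p : pt) : pt := inv1 (psi (inv1 p)).

Lemma fl_ge1 t : 1 <= t -> (1 <= fl t)%nat.
Proof.
  intro H. pose proof (fl_spec t ltac:(lra)). destruct (fl t). simpl in H0. lra. lia.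
Qed.

Lemma gg_E p : 0 < fst p <= 1 -> E (gg p) /\ 1 <= fst (psi (inv1 p)).
Proof.
  intro Hp. unfold gg. assert (Ht : 1 <= fst (inv1 p)).
  { unfold inv1; simpl. apply inv_ge1. lra. }
  unfold psi at 1 2. destruct (HH_inE (fl (fst (inv1 p))) (fst (inv1 p)) (snd (inv1 p)) (fl_ge1 _ Ht)) as [A B].
  split; auto. unfold inv1 at 1. apply E_of_t; auto. lra.
Qed.

Lemma gg_id p : E p -> fst p > 0 -> gg p = p.
Proof.
  intros HE Hx. destruct (E_tform p HE Hx) as [Hy H].
  destruct p as [x y]. simpl in *. unfold gg, inv1 at 2. simpl.
  assert (Hinv : forall q, q = (1/x, y) -> inv1 q = (x, y)).
  { intros q ->. unfold inv1. cbn [fst snd]. rewrite inv_inv1 by lra. reflexivity. }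
  apply Hinv.
  destruct H as [[n [Hn Hv]]|[[n [Hn [Hb Hy1]]]|[n [Hn [Hb Hy0]]]]].
  - rewrite (psi_eq n) by (cbn [fst]; lra). cbn [fst snd]. rewrite Hv, HH_vert, clampy_id; auto.
  - assert (E1 : INR (2*n-1) = 2 * INR n - 1) by (apply INR_2nm1; auto).
    rewrite (psi_eq (2*n-1)) by (cbn [fst]; lra). cbn [fst snd]. apply HH_bar. lra.
    replace (2*n-1)%nat with (2*(n-1)+1)%nat by lia. rewrite even_2n1. auto.
  - rewrite (psi_eq (2*n)) by (cbn [fst]; rewrite INR_2n; lra). cbn [fst snd]. apply HH_bar. rewrite INR_2n; lra.
    rewrite even_2n. auto.
Qed.

Lemma gg_cont p : 0 < fst p <= 1 -> ptc gg p.
Proof.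
  intro Hp. unfold gg. apply ptc_comp with (F := fun q => psi (inv1 q)).
  - apply ptc_comp. apply ptc_inv. lra. apply psi_cont. unfold inv1; simpl.
    apply Rle_ge. apply inv_ge1. lra.
  - apply ptc_inv. destruct (gg_E p Hp). lra.
Qed.


Definition clampN (N : nat) (p : pt) : pt := (Rmax (fst p) (1 / INR (S N)), snd p).
Definition fN (N : nat) (p : pt) : pt := gg (clampN N p).
Definition rr (p : pt) : pt := if Rle_dec (fst p) 0 then p else gg p.

Lemma cN_pos N : 0 < 1 / INR (S N) <= 1.
Proof. pose proof (INR_ge1 (S N) ltac:(lia)). split. apply inv_pos; lra.
  unfold Rdiv. rewrite Rmult_1_l. rewrite <- Rinv_1. apply Rinv_le_contravar; lra. Qed.

Lemma clampN_range N p : square p -> 0 < fst (clampN N p) <= 1.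
Proof. intros [Hx Hy]. pose proof (cN_pos N). unfold clampN; cbn [fst snd].
  unfold Rmax; destruct Rle_dec; lra. Qed.

Lemma E_B1 : B1_retract square E.
Proof.
  exists rr. split; [split|].
  - intros p Hp. unfold rr. destruct Rle_dec.
    + destruct Hp as [Hx Hy]. left. split; lra.
    + apply gg_E. destruct Hp; lra.
  - exists fN. split.
    + intros N. split.
      * intros p Hp. apply gg_E. apply clampN_range; auto.
      * intros p Hp eps He.
        assert (ptc (fun q => gg (clampN N q)) p).
        { apply ptc_comp. unfold clampN. apply ptc_pair. apply rc_max. apply rc_fst. apply rc_const.
          apply rc_snd. apply gg_cont. apply clampN_range; auto. }
        destruct (H eps He) as [d [Hd H2]]. exists d. split; auto. intros q _ Hq. apply H2; auto.
    + intros p Hp eps He. destruct Hp as [Hx Hy]. unfold rr. destruct Rle_dec as [Hle|Hnle].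
      * destruct (INR_unbounded (1 / eps)) as [N HN]. exists N. intros n Hn.
        assert (Fe : fN n p = (1 / INR (S n), snd p)).
        { unfold fN, clampN. pose proof (cN_pos n).
          replace (Rmax (fst p) (1 / INR (S n))) with (1 / INR (S n)) by (unfold Rmax; destruct Rle_dec; lra).
          apply gg_id. apply E_vert. lia. auto. cbn [fst]; lra. }
        rewrite Fe. rewrite d_horiz by reflexivity. cbn [fst snd].
        pose proof (cN_pos n). rewrite Rabs_right by lra.
        apply le_INR in Hn. pose proof (pos_INR N). pose proof (INR_ge1 (S n) ltac:(lia)).
        rewrite S_INR in *.
        assert (1 / (INR n + 1) < eps).
        { apply lt_inv_l. lra. lra. lra. }
        lra.
      * assert (Hx0 : 0 < fst p) by lra.
        destruct (INR_unbounded (1 / fst p)) as [N HN]. exists N. intros n Hn.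
        assert (Fe : fN n p = gg p).
        { unfold fN, clampN. replace (Rmax (fst p) (1 / INR (S n))) with (fst p).
          rewrite <- surjective_pairing. reflexivity.
          apply le_INR in Hn. rewrite S_INR. pose proof (pos_INR N).
          assert (1 / (INR n + 1) < fst p) by (apply lt_inv_l; lra).
          unfold Rmax; destruct Rle_dec; lra. }
        rewrite Fe, d_refl. lra.
  - intros p Hp. unfold rr. destruct Rle_dec; auto. apply gg_id; auto. lra.
Qed.


Theorem mainTheorem8 :
  (forall p, E p -> square p) /\
  connected2 E /\ closed2 E /\
  ~ arcwise_connected2 E /\ ~ locally_connected2 E /\
  B1_retract square E.
Proof.
  split. exact E_square. split. exact E_connected. split. exact E_closed.
  split. exact E_not_arc. split. exact E_not_lc. exact E_B1.
Qed.
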